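(* Let $n\geq 2$ and let $L'_n$ be the graph of the $\alpha,\omega$-dicyclobutadieno derivative of $[n-1]$-phenylene (defined in the context). Then the base polynomial counting distances between pairs of degree-2 vertices of $L'_n$ is \begin{eqnarray*} H^{2,2}_{b}(L'_{n}) &=& 2x+(3n-1)x^{3}+2\sum_{k=2}^{n-1}(n-k)x^{3k-2}+4\sum_{k=1}^{n-1}x^{3k-1}\\ &&+2\sum_{k=2}^{n-1}(n-k+1)x^{3k}+2x^{3n-2}+2x^{3n-1}. \end{eqnarray*}
   Context: All graphs are finite, simple and connected; $d(u,v)$ denotes the shortest-path distance and $d_u$ the degree of a vertex $u$. For a graph $G$ and a degree $p$, the base polynomial is $H^{p,p}_{b}(G)=\sum x^{d(u,v)}$, where the sum runs over all unordered pairs $\{u,v\}$ of distinct vertices of $G$ both of degree $p$. Construction of $L'_n$ ($n\ge 2$): take $n-1$ hexagons $H_1,\dots,H_{n-1}$, hexagon $H_i$ being the 6-cycle $a_i b_i c_i d_i e_i f_i a_i$, and for $i=1,\dots,n-2$ add edges $b_i f_{i+1}$ and $c_i e_{i+1}$ (so consecutive hexagons are joined by the 4-cycle $b_i c_i e_{i+1} f_{i+1}$). Then add four new vertices $p,q,r,s$ with edges $pq$, $pf_1$, $qe_1$ (forming the 4-cycle $f_1 e_1 q p$) and $rs$, $rb_{n-1}$, $sc_{n-1}$ (forming the 4-cycle $b_{n-1} c_{n-1} s r$). Thus $L'_n$ has $n-1$ hexagons and $n$ squares, $2n+2$ vertices of degree 2 and $4n-4$ vertices of degree 3. *)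

(* Defs.v *)
From mathcomp Require Import all_boot all_order all_algebra.
Set Implicit Arguments. Unset Strict Implicit. Unset Printing Implicit Defensive.
Import GRing.Theory.
Local Open Scope ring_scope.

Section Graph.
Variables (T : finType) (e : rel T).

Definition deg (u : T) : nat := #|[set v | e u v]|.

Fixpoint ball (k : nat) (u : T) : {set T} :=
  if k is k'.+1 then ball k' u :|: [set y | [exists x in ball k' u, e x y]]
  else [set u].

(** shortest-path distance: least k with v within k steps of u
    (the search range 0..#|T|-1 suffices in a connected graph). *)
Definition dist (u v : T) : nat :=
  find (fun k => v \in ball k u) (iota 0 #|T|).

(** base polynomial H^{p,p}_b: sum of x^{d(u,v)} over unordered pairs {u,v}
    of distinct vertices both of degree p (unordered pairs enumerated once via
    the canonical ordering [enum_rank u < enum_rank v]). *)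
Definition base_poly (p : nat) : {poly int} :=
  \sum_(u : T) \sum_(v : T | (enum_rank u < enum_rank v)%N && (deg u == p) && (deg v == p))
     'X^(dist u v).
End Graph.

(** The graph L'_n.  Vertices: inl (i, j) is vertex j of hexagon H_{i+1}
    (i < n-1) with j = 0..5 standing for a,b,c,d,e,f; inr 0,1,2,3 are p,q,r,s. *)
Definition LV (n : nat) : finType := ('I_n.-1 * 'I_6 + 'I_4)%type.

Definition Ladj (n : nat) (x y : LV n) : bool :=
  match x, y with
  | inl (i, j), inl (i', j') =>
      ((i == i' :> nat) && (j' == (j.+1 %% 6)%N :> nat))
      (* b_i f_{i+1} and c_i e_{i+1} *)
      || ((i'  == i.+1 :> nat) &&
          (((j == 1 :> nat) && (j' == 5 :> nat)) || ((j == 2 :> nat) && (j' == 4 :> nat))))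
  | inr k, inr k' =>
      (* p q and r s *)
      ((k == 0 :> nat) && (k' == 1 :> nat)) || ((k == 2 :> nat) && (k' == 3 :> nat))
  | inr k, inl (i, j) =>
      (* p f_1, q e_1, r b_{n-1}, s c_{n-1} *)
      ((k == 0 :> nat) && (i == 0 :> nat) && (j == 5 :> nat))
      || ((k == 1 :> nat) && (i == 0 :> nat) && (j == 4 :> nat))
      || ((k == 2 :> nat) && (i == n.-2 :> nat) && (j == 1 :> nat))
      || ((k == 3 :> nat) && (i == n.-2 :> nat) && (j == 2 :> nat))
  | inl _, inr _ => false
  end.

Definition Lrel (n : nat) : rel (LV n) := fun x y => Ladj x y || Ladj y x.
Arguments Lrel : clear implicits.
Arguments Ladj : clear implicits.

(* Main.v *)
Require Import Defs.
From mathcomp Require Import all_boot all_order all_algebra.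
From mathcomp Require Import zify ring.
Import GRing.Theory.
Set Implicit Arguments. Unset Strict Implicit. Unset Printing Implicit Defensive.
Open Scope nat_scope.

Definition colj (j : nat) : nat :=
  match j with 0 => 2 | 1 => 3 | 2 => 3 | 3 => 2 | _ => 1 end.
Definition rowj (j : nat) : bool := (j == 0) || (j == 1) || (j == 5).

Definition col n (x : LV n) : nat :=
  match x with inl (i, j) => 3 * i + colj j | inr k => if k < 2 then 0 else 3 * n - 2 end.
Definition row n (x : LV n) : bool :=
  match x with inl (i, j) => rowj j | inr k => (k == 0 :> nat) || (k == 2 :> nat) end.

Definition ladj (c1 : nat) (r1 : bool) (c2 : nat) (r2 : bool) : bool :=
  ((c1 == c2) && (r1 != r2) && (c1 %% 3 != 2)) || ((r1 == r2) && ((c1 == c2.+1) || (c2 == c1.+1))).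

Lemma Lrel_ladj n (hn : 2 <= n) (x y : LV n) :
  Lrel n x y = ladj (col x) (row x) (col y) (row y).
Proof.
case: x => [[i [[|[|[|[|[|[|j]]]]]] Hj]]|[[|[|[|[|k]]]] Hk]] //;
case: y => [[i' [[|[|[|[|[|[|j']]]]]] Hj']]|[[|[|[|[|k']]]] Hk']] //;
rewrite /Lrel /Ladj /ladj /col /row /rowj /colj /=;
try (have := ltn_ord i); try (have := ltn_ord i'); lia.
Qed.

Lemma col_le n (hn : 2 <= n) (x : LV n) : col x <= 3 * n - 2.
Proof.
case: x => [[i [[|[|[|[|[|[|j]]]]]] Hj]]|[[|[|[|[|k]]]] Hk]] //=;
rewrite /colj; try (have := ltn_ord i); lia.
Qed.

Definition jof (t : nat) (r : bool) : 'I_6 :=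
  inord (if r then (match t with 0 => 5 | 1 => 0 | _ => 1 end)
         else (match t with 0 => 4 | 1 => 3 | _ => 2 end)).

Definition phi n (c : nat) (r : bool) : LV n :=
  if c == 0 then inr (inord (if r then 0 else 1))
  else if c == 3 * n - 2 then inr (inord (if r then 2 else 3))
  else match insub ((c - 1) %/ 3) with
       | Some i => inl (i, jof ((c - 1) %% 3) r)
       | None => inr (inord 0) end.

Lemma phiK n (hn : 2 <= n) (x : LV n) : phi n (col x) (row x) = x.
Proof.
case: x => [[i j]|k].
  have hi := ltn_ord i.
  have hj := ltn_ord j.
  rewrite /phi /=.
  have -> : (3 * i + colj j == 0) = false by case: j hj => [[|[|[|[|[|[|j]]]]]] Hj] /=; lia.
  have -> : (3 * i + colj j == 3 * n - 2) = false by case: j hj => [[|[|[|[|[|[|j]]]]]] Hj] /=; lia.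
  have -> : (3 * i + colj j - 1) %/ 3 = i by case: j hj => [[|[|[|[|[|[|j]]]]]] Hj] /=; lia.
  rewrite valK; have -> // : jof ((3 * i + colj j - 1) %% 3) (rowj j) = j; apply/val_inj.
  have -> : (3 * i + colj j - 1) %% 3 = colj j - 1 by case: j hj => [[|[|[|[|[|[|j]]]]]] Hj] /=; lia.
  by case: j hj => [[|[|[|[|[|[|j]]]]]] Hj] //= _; rewrite /jof inordK.
have hk := ltn_ord k.
case: k hk => [[|[|[|[|k]]]] Hk] //= _; rewrite /phi /=;
  try (have -> : (3 * n - 2 == 0) = false by lia);
  rewrite ?eqxx; congr inr; apply/val_inj; rewrite /= inordK //.
Qed.

Lemma colrow_phi n (hn : 2 <= n) c r : c <= 3 * n - 2 ->
  col (phi n c r) = c /\ row (phi n c r) = r.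
Proof.
move=> hc; rewrite /phi.
case: eqP => [->|c0].
  by case: r => /=; rewrite inordK.
case: eqP => [->|c1].
  by case: r => /=; rewrite inordK //=; split => //; lia.
case: insubP => [i _ hi|hni]; last first.
  have : (c - 1) %/ 3 < n.-1 by lia.
  by rewrite (negbTE hni).
rewrite /= hi.
have ht : (c - 1) %% 3 < 3 by lia.
have hc' : c = 3 * ((c - 1) %/ 3) + (c - 1) %% 3 + 1 by lia.
move: ht hc'; case: ((c - 1) %% 3) => [|[|[|t]]] //= _ hc';
  by case: r; rewrite /jof inordK //=; split => //; lia.
Qed.

Lemma coord_inj n (hn : 2 <= n) (x y : LV n) : col x = col y -> row x = row y -> x = y.
Proof. by move=> h1 h2; rewrite -(phiK hn x) -(phiK hn y) h1 h2. Qed.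

Definition Dc (c1 : nat) (r1 : bool) (c2 : nat) (r2 : bool) : nat :=
  (c1 - c2) + (c2 - c1) + (r1 != r2) + 2 * ((c1 == c2) && (r1 != r2) && (c1 %% 3 == 2)).

Lemma Dc_step cu ru cx rx cy ry : ladj cx rx cy ry -> Dc cu ru cy ry <= (Dc cu ru cx rx).+1.
Proof. rewrite /ladj /Dc; case: ru rx ry => [] [] [] /=; lia. Qed.

Lemma ladj_sym c1 r1 c2 r2 : ladj c1 r1 c2 r2 = ladj c2 r2 c1 r1.
Proof. rewrite /ladj; case: r1 r2 => [] [] /=; lia. Qed.

Lemma Dc_back n (hn : 2 <= n) cu ru cv rv k : cu <= 3 * n - 2 -> cv <= 3 * n - 2 ->
  Dc cu ru cv rv = k.+1 ->
  exists cw rw, [/\ cw <= 3 * n - 2, ladj cw rw cv rv & Dc cu ru cw rw = k].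
Proof.
move=> hu hv Hk; rewrite /Dc /ladj in Hk *.
case: (ltngtP cu cv) => H.
- case: (boolP ((ru != rv) && (cv %% 3 != 2))) => C.
    exists cv, ru; split; move: C Hk; case: ru rv => [] [] /=; lia.
  exists cv.-1, rv; split; move: C Hk; case: ru rv => [] [] /=; lia.
- case: (boolP ((ru != rv) && (cv %% 3 != 2))) => C.
    exists cv, ru; split; move: C Hk; case: ru rv => [] [] /=; lia.
  exists cv.+1, rv; split; move: C Hk; case: ru rv => [] [] /=; lia.
- case: (boolP (cv %% 3 == 2)) => C.
    exists cv.+1, rv; split; move: C Hk; case: ru rv => [] [] /=; lia.
  exists cv, ru; split; move: C Hk; case: ru rv => [] [] /=; lia.
Qed.

Definition D n (u v : LV n) := Dc (col u) (row u) (col v) (row v).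

Lemma ballE n (hn : 2 <= n) k (u : LV n) : ball (Lrel n) k u = [set v | D u v <= k].
Proof.
elim: k => [|k IH] /=.
  apply/setP => v; rewrite !inE; apply/eqP/idP => [->|H].
    by rewrite /D /Dc; lia.
  apply: coord_inj => //; move: H; rewrite /D /Dc; case: (row v) (row u) => [] [] /=; lia.
rewrite IH; apply/setP => v; rewrite !inE; apply/idP/idP.
  case/orP => [H|/existsP [x /andP [Hx Hxv]]]; first by lia.
  rewrite inE in Hx; rewrite Lrel_ladj // in Hxv.
  have := Dc_step (col u) (row u) Hxv; rewrite /D in Hx *; lia.
move=> H; case: (leqP (D u v) k) => [Hle|Hgt]; first by apply/orP; left.
have Hk : D u v = k.+1 by lia.
have [cw [rw [h1 h2 h3]]] := Dc_back hn (col_le hn u) (col_le hn v) Hk.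
have [e1 e2] := colrow_phi hn rw h1.
apply/orP; right; apply/existsP; exists (phi n cw rw).
by rewrite inE /D e1 e2 h3 leqnn Lrel_ladj // e1 e2.
Qed.

Lemma find_ge d m N : m <= d < m + N -> find (fun k => d <= k) (iota m N) = d - m.
Proof.
elim: N m => [|N IH] m H; first by lia.
rewrite /=; case: ifP => H1; first by lia.
rewrite IH; lia.
Qed.

Lemma distE n (hn : 2 <= n) (u v : LV n) : dist (Lrel n) u v = D u v.
Proof.
rewrite /dist (eq_find (a2 := fun k => D u v <= k)); last first.
  by move=> k; rewrite ballE // inE.
rewrite find_ge ?subn0 //.
rewrite card_sum card_prod !card_ord.
have := col_le hn u; have := col_le hn v; rewrite /D /Dc; lia.
Qed.

Lemma card_inj_list (T : finType) (U : eqType) (f : T -> U) (A : {pred T}) (L : seq U) :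
  injective f -> uniq L -> (forall y, y \in L <-> exists2 x, x \in A & f x = y) ->
  #|A| = size L.
Proof.
move=> fi uL HL; rewrite cardE -(size_map f).
apply: perm_size; apply: uniq_perm; first by rewrite map_inj_uniq ?enum_uniq.
  done.
move=> y; apply/mapP/idP.
  by case=> x; rewrite mem_enum => Hx ->; apply/HL; exists x.
by move/HL => [x Hx <-]; exists x; rewrite ?mem_enum.
Qed.

Definition nbrs n c (r : bool) : seq (nat * bool) :=
  (if c %% 3 != 2 then [:: (c, ~~ r)] else [::]) ++
  (if 0 < c then [:: (c.-1, r)] else [::]) ++
  (if c < 3 * n - 2 then [:: (c.+1, r)] else [::]).

Lemma degE n (hn : 2 <= n) (v : LV n) :
  deg (Lrel n) v = (col v %% 3 != 2) + (0 < col v) + (col v < 3 * n - 2).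
Proof.
have hv := col_le hn v.
rewrite /deg (@card_inj_list _ _ (fun x => (col x, row x)) _ (nbrs n (col v) (row v))).
- by rewrite /nbrs; case: ifP; case: ifP; case: ifP => /=; lia.
- move=> x y [] h1 h2; exact: coord_inj.
- rewrite /nbrs; case: (row v); case: ifP; case: ifP; case: ifP => /=;
    rewrite ?inE ?xpair_eqE; lia.
case=> cy ry; split.
  move=> Hy.
  have Hc : cy <= 3 * n - 2 /\ ladj (col v) (row v) cy ry.
    move: Hy; rewrite /nbrs /ladj; case: (row v); case: ry;
      case: ifP; case: ifP; case: ifP => /=; rewrite ?mem_cat ?inE ?xpair_eqE; lia.
  case: Hc => h1 h2; have [e1 e2] := colrow_phi hn ry h1.
  by exists (phi n cy ry); rewrite ?inE ?Lrel_ladj // ?e1 ?e2.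
case=> x; rewrite inE Lrel_ladj // => Hx [<- <-].
have := col_le hn x.
move: Hx; rewrite /nbrs /ladj; case: (row v); case: (row x);
  case: ifP; case: ifP; case: ifP => /=; rewrite ?mem_cat ?inE ?xpair_eqE; lia.
Qed.

Open Scope ring_scope.

Lemma sym_pairs (T : finType) (R : nmodType) (F : T -> T -> R) (P : pred T) :
  (forall u v, F u v = F v u) ->
  ((\sum_u \sum_(v | (enum_rank u < enum_rank v)%N && P u && P v) F u v) *+ 2 =
  \sum_u \sum_(v | (u != v) && P u && P v) F u v)%R.
Proof.
move=> Fs.
have mk : forall c : T -> T -> bool, \sum_u \sum_(v | c u v) F u v =
   \sum_u \sum_v (if c u v then F u v else 0%R).
  by move=> c; apply: eq_bigr => u _; rewrite big_mkcond.
rewrite !mk mulr2n.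
have E : \sum_u \sum_v (if (enum_rank u < enum_rank v)%N && P u && P v then F u v else 0%R) =
         \sum_u \sum_v (if (enum_rank v < enum_rank u)%N && P u && P v then F u v else 0%R).
  rewrite exchange_big; apply: eq_bigr => u _; apply: eq_bigr => v _.
  by rewrite Fs; case: (P u); case: (P v); rewrite ?andbT ?andbF.
rewrite {2}E -big_split; apply: eq_bigr => u _; rewrite -big_split; apply: eq_bigr => v _ /=.
rewrite -(inj_eq enum_rank_inj) -val_eqE /=.
case: (P u); case: (P v); rewrite ?andbT ?andbF ?addr0 //.
by case: ltngtP; rewrite ?addr0 ?add0r.
Qed.

Lemma reindex_pred (T J : finType) (R : nmodType) (h : J -> T) (P : pred T) (G : T -> R) :
  injective h -> (forall x, P x <-> exists j, x = h j) ->
  \sum_x (if P x then G x else 0%R) = \sum_j G (h j).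
Proof.
move=> hi hP; rewrite -big_mkcond.
rewrite (eq_bigl (fun x => x \in h @: [set: J])); last first.
  move=> x; apply/idP/imsetP.
    by move/hP => [j ->]; exists j; rewrite ?inE.
  by case=> j _ ->; apply/hP; exists j.
rewrite big_imset /=; last by move=> a b _ _; apply: hi.
by apply: eq_bigl => j; rewrite inE.
Qed.

Close Scope ring_scope.

Definition cg n g := if g == 0 then 0 else if g == n then 3 * n - 2 else 3 * g - 1.
Definition hh n (j : 'I_n.+1 * bool) : LV n := phi n (cg n j.1) j.2.

Lemma cg_le n g : g <= n -> cg n g <= 3 * n - 2.
Proof. rewrite /cg; repeat (case: ifP => ?); lia. Qed.

Lemma hh_coord n (hn : 2 <= n) (j : 'I_n.+1 * bool) : col (hh j) = cg n j.1 /\ row (hh j) = j.2.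
Proof. apply: colrow_phi => //; apply: cg_le; have := ltn_ord j.1; lia. Qed.

Lemma hh_inj n (hn : 2 <= n) : injective (@hh n).
Proof.
case=> [g1 r1] [g2 r2] E.
have [a1 b1] := hh_coord hn (g1, r1); have [a2 b2] := hh_coord hn (g2, r2).
rewrite E in a1 b1; rewrite a1 in a2; rewrite b1 in b2; simpl in a2, b2.
rewrite b2; congr pair; apply/val_inj => /=.
move: a2; have := ltn_ord g1; have := ltn_ord g2; rewrite /cg.
repeat (case: ifP => ?); lia.
Qed.

Lemma hh_onto n (hn : 2 <= n) (x : LV n) :
  (deg (Lrel n) x == 2) <-> exists j, x = hh j.
Proof.
rewrite degE //; split.
  move=> H; have hx := col_le hn x.
  pose g := if col x == 0 then 0 else if col x == 3 * n - 2 then n else (col x + 1) %/ 3.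
  have hg : g < n.+1 by rewrite /g; repeat (case: ifP => ?); lia.
  exists (Ordinal hg, row x).
  rewrite /hh /= -{1}(phiK hn x); congr phi.
  rewrite /g; case: (col x =P 0) => [->|c0] /=; first by rewrite /cg.
  case: (col x =P 3 * n - 2) => [->|c1] /=; first by rewrite /cg; repeat (case: ifP => ?); lia.
  move: H; rewrite /cg; repeat (case: ifP => ?); lia.
case=> j ->; have [-> _] := hh_coord hn j.
have := ltn_ord j.1; rewrite /cg; repeat (case: ifP => ?); lia.
Qed.

Open Scope ring_scope.

Lemma sym_nat (R : comNzRingType) (W : nat -> nat -> R) N : (forall i j, W i j = W j i) ->
  \sum_(0 <= i < N) \sum_(0 <= j < N) W i j =
  \sum_(0 <= i < N) W i i + 2 * \sum_(0 <= i < N) \sum_(0 <= j < i) W i j.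
Proof.
move=> Ws; elim: N => [|N IH]; first by rewrite !big_geq // mulr0 addr0.
have e1 : \sum_(0 <= i < N.+1) \sum_(0 <= j < N.+1) W i j =
  \sum_(0 <= i < N.+1) \sum_(0 <= j < N) W i j + \sum_(0 <= i < N.+1) W i N.
  by rewrite -big_split; apply: eq_bigr => i _; rewrite big_nat_recr.
have e2 : \sum_(0 <= i < N) W i N = \sum_(0 <= j < N) W N j.
  by apply: eq_bigr => i _; rewrite Ws.
rewrite e1 !big_nat_recr //= IH e2 //=.
ring.
Qed.

Lemma DD_lem (R : comNzRingType) (y : R) m :
  \sum_(1 <= i < m) \sum_(1 <= j < i) y ^+ (i - j) = \sum_(1 <= d < m) (m - 1 - d)%:R * y ^+ d.
Proof.
elim: m => [|m IH]; first by rewrite !big_geq.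
case: m IH => [|m] IH; first by rewrite !big_geq.
rewrite big_nat_recr // IH [RHS]big_nat_recr //= subnn mul0r addr0.
have -> : \sum_(1 <= j < m.+1) y ^+ (m.+1 - j) = \sum_(1 <= d < m.+1) y ^+ d.
  rewrite big_nat_rev; apply: eq_big_nat => j hj; congr (_ ^+ _); lia.
rewrite -big_split; apply: eq_big_nat => d hd /=.
have -> : (m.+2 - 1 - d)%N = ((m.+1 - 1 - d) + 1)%N by lia.
by rewrite natrD mulrDl mul1r.
Qed.

Lemma cg_lt n i j : (j < i)%N -> (i <= n)%N -> (1 < n)%N -> (cg n j < cg n i)%N.
Proof. rewrite /cg; repeat (case: ifP => ?); lia. Qed.

Lemma Dc_ne a b r s : a != b -> Dc a r b s = ((a - b) + (b - a) + (r != s))%N.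
Proof. rewrite /Dc; case: r s => [] [] /=; lia. Qed.

Lemma cg0 n : cg n 0 = 0%N. Proof. by []. Qed.
Lemma cgn n : (0 < n)%N -> cg n n = (3 * n - 2)%N.
Proof. by rewrite /cg eqxx; case: n. Qed.
Lemma cgi n i : (0 < i < n)%N -> cg n i = (3 * i - 1)%N.
Proof. rewrite /cg; repeat (case: ifP => ?); lia. Qed.

Lemma E2_lem (R : comNzRingType) (x : R) m :
  \sum_(2 <= k < m.+2) (m.+2 - k)%:R * x ^+ (3 * k - 2) =
  x * \sum_(1 <= d < m.+2) (m.+2 - 1 - d)%:R * (x ^+ 3) ^+ d.
Proof.
rewrite big_add1 /= mulr_sumr [RHS]big_nat_recr //=.
have -> : (m.+2 - 1 - m.+1 = 0)%N by lia.
rewrite mul0r mulr0 addr0; apply: eq_big_nat => k hk.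
have -> : (m.+2 - k.+1 = m.+2 - 1 - k)%N by lia.
have -> : (3 * k.+1 - 2 = (3 * k).+1)%N by lia.
by rewrite -exprM exprS; ring.
Qed.

Lemma E1_lem (R : comNzRingType) (x : R) m :
  (m.+2)%:R * x ^+ 3 + \sum_(2 <= k < m.+2) (m.+2 - k + 1)%:R * x ^+ (3 * k) =
  2 * x * \sum_(1 <= k < m.+2) x ^+ (3 * k - 1) +
  \sum_(1 <= d < m.+2) (m.+2 - 1 - d)%:R * (x ^+ 3) ^+ d.
Proof.
have -> : (m.+2)%:R * x ^+ 3 = (m.+2 - 1 + 1)%:R * x ^+ (3 * 1) by congr (_ %:R * _); lia.
rewrite -(big_ltn (F := fun k => (m.+2 - k + 1)%:R * x ^+ (3 * k))) //.
rewrite mulr_sumr -big_split; apply: eq_big_nat => k hk /=.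
have -> : (m.+2 - k + 1 = 2 + (m.+2 - 1 - k))%N by lia.
have e : x ^+ (3 * k) = x * x ^+ (3 * k - 1) by rewrite -exprS; congr (_ ^+ _); lia.
by rewrite natrD -exprM e; ring.
Qed.

Lemma S3 (R : comNzRingType) (x : R) n (hn : (2 <= n)%N) :
  \sum_(j : 'I_n.+1 * bool) \sum_(j' : 'I_n.+1 * bool)
     (if j != j' then x ^+ Dc (cg n j.1) j.2 (cg n j'.1) j'.2 else 0)
  = 2 * (2 * x + (3 * n - 1)%:R * x ^+ 3
    + 2 * (\sum_(2 <= k < n) (n - k)%:R * x ^+ (3 * k - 2))
    + 4 * (\sum_(1 <= k < n) x ^+ (3 * k - 1))
    + 2 * (\sum_(2 <= k < n) (n - k + 1)%:R * x ^+ (3 * k))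
    + 2 * x ^+ (3 * n - 2) + 2 * x ^+ (3 * n - 1)).
Proof.
pose W := fun i j : nat =>
  if i == j then 2 * x ^+ (1 + 2 * (cg n i %% 3 == 2))%N
  else 2 * x ^+ ((cg n i - cg n j) + (cg n j - cg n i))%N +
       2 * x ^+ ((cg n i - cg n j) + (cg n j - cg n i)).+1%N.
have E1 : forall G : 'I_n.+1 * bool -> R,
    \sum_j G j = \sum_(g < n.+1) (G (g, true) + G (g, false)).
  move=> G; transitivity (\sum_(g < n.+1) \sum_(r : bool) G (g, r)); last first.
    by apply: eq_bigr => g _; rewrite big_bool.
  by rewrite pair_big; apply: eq_big => [[g r]|[g r] _].
have E2 : \sum_(j : 'I_n.+1 * bool) \sum_(j' : 'I_n.+1 * bool)
     (if j != j' then x ^+ Dc (cg n j.1) j.2 (cg n j'.1) j'.2 else 0) =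
   \sum_(0 <= i < n.+1) \sum_(0 <= j < n.+1) W i j.
  rewrite E1 big_mkord; apply: eq_bigr => i _.
  rewrite !E1 -big_split big_mkord; apply: eq_bigr => j _ /=.
  rewrite /W !xpair_eqE /=.
  have -> : (nat_of_ord i == nat_of_ord j) = (i == j) by [].
  case: (i =P j) => [<-|ne] /=.
    have D1 : Dc (cg n i) true (cg n i) false = (1 + 2 * (cg n i %% 3 == 2))%N by rewrite /Dc; lia.
    have D2 : Dc (cg n i) false (cg n i) true = (1 + 2 * (cg n i %% 3 == 2))%N by rewrite /Dc; lia.
    rewrite D1 D2; ring.
  have hne : cg n i != cg n j.
    have := ltn_ord i; have := ltn_ord j; move/eqP: ne; rewrite -val_eqE /= /cg.
    repeat (case: ifP => ?); lia.
  rewrite !Dc_ne //= !addn0 !addn1; ring.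
have Ws : forall i j, W i j = W j i.
  move=> i j; rewrite /W eq_sym; case: eqP => [->//|_].
  by rewrite (addnC (cg n j - cg n i)%N).
rewrite E2 sym_nat //.
have Diag : \sum_(0 <= i < n.+1) W i i = 4 * x + (n - 1)%:R * (2 * x ^+ 3).
  rewrite big_nat_recr //= big_ltn; last lia.
  rewrite (eq_big_nat _ _ (F2 := fun _ => 2 * x ^+ 3)); last first.
    move=> i hi; rewrite /W eqxx cgi; last lia.
    congr (_ * _ ^+ _); lia.
  rewrite sumr_const_nat /W !eqxx cg0 cgn; last lia.
  have -> : (1 + 2 * ((3 * n - 2) %% 3 == 2))%N = 1%N by lia.
  rewrite -mulr_natl /=; ring.
pose s1 := \sum_(1 <= k < n) x ^+ (3 * k - 1).
pose DD := \sum_(1 <= d < n) (n - 1 - d)%:R * (x ^+ 3) ^+ d.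
have Off : \sum_(0 <= i < n.+1) \sum_(0 <= j < i) W i j =
    (2 + 2 * x) * (x ^+ (3 * n - 2) + 2 * s1 + DD).
  transitivity ((2 + 2 * x) * \sum_(0 <= i < n.+1) \sum_(0 <= j < i) x ^+ (cg n i - cg n j)).
    rewrite mulr_sumr; apply: eq_big_nat => i hi; rewrite mulr_sumr; apply: eq_big_nat => j hj.
    have hl : (cg n j < cg n i)%N by apply: cg_lt; lia.
    rewrite /W; have -> : (i == j) = false by lia.
    have -> : (cg n j - cg n i = 0)%N by lia.
    rewrite addn0 exprS; ring.
  congr (_ * _).
  rewrite big_nat_recr //= big_ltn; last lia.
  rewrite big_geq // add0r.
  rewrite (eq_big_nat _ _ (F2 := fun i => x ^+ (3 * i - 1) + \sum_(1 <= j < i) (x ^+ 3) ^+ (i - j))); last first.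
    move=> i hi; rewrite big_ltn; last lia.
    rewrite cg0 cgi; last lia.
    rewrite subn0; congr (_ + _).
    apply: eq_big_nat => j hj; rewrite -exprM !cgi; try lia.
    congr (_ ^+ _); lia.
  rewrite big_split /= DD_lem -/s1 -/DD.
  rewrite big_ltn; last lia.
  have -> : \sum_(1 <= j < n) x ^+ (cg n n - cg n j) = s1.
    rewrite /s1 big_nat_rev; apply: eq_big_nat => j hj.
    rewrite cgn; last lia.
    rewrite cgi; last lia.
    congr (_ ^+ _); lia.
  rewrite cg0 subn0 cgn; last lia.
  ring.
rewrite Diag Off /s1 /DD.
case: n hn {W E1 E2 Ws Diag Off s1 DD} => [|[|m]] // _.
have E1' := E1_lem x m.
rewrite E2_lem.
have -> : \sum_(2 <= k < m.+2) (m.+2 - k + 1)%:R * x ^+ (3 * k) = 2 * x * \sum_(1 <= k < m.+2) x ^+ (3 * k - 1) +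
  \sum_(1 <= d < m.+2) (m.+2 - 1 - d)%:R * (x ^+ 3) ^+ d - (m.+2)%:R * x ^+ 3.
  by rewrite -E1'; ring.
have -> : x ^+ (3 * m.+2 - 1) = x * x ^+ (3 * m.+2 - 2) by rewrite -exprS; congr (_ ^+ _); lia.
have -> : (3 * m.+2 - 1 = 3 * m + 5)%N by lia.
have -> : (m.+2 - 1 = m.+1)%N by lia.
ring.
Qed.

Theorem theorem2p4 (n : nat) (hn : (2 <= n)%N) :
  base_poly (Lrel n) 2 =
    2 * 'X + (3 * n - 1)%:R * 'X^3
    + 2 * (\sum_(2 <= k < n) (n - k)%:R * 'X^(3 * k - 2))
    + 4 * (\sum_(1 <= k < n) 'X^(3 * k - 1))
    + 2 * (\sum_(2 <= k < n) (n - k + 1)%:R * 'X^(3 * k))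
    + 2 * 'X^(3 * n - 2) + 2 * 'X^(3 * n - 1).
Proof.
have h2 : (2 : {poly int}) != 0.
  by rewrite -polyC_natr polyC_eq0.
apply: (mulfI h2); rewrite -S3 // mulr_natl /base_poly.
rewrite (@sym_pairs _ _ (fun u v => 'X^(dist (Lrel n) u v)) (fun u => deg (Lrel n) u == 2%N)); last first.
  by move=> u v; rewrite !distE // /D /Dc; congr (_ ^+ _); case: (row u) (row v) => [] [] /=; lia.
pose P := fun u : LV n => deg (Lrel n) u == 2%N.
transitivity (\sum_u (if P u then \sum_v (if P v then
   (if u != v then 'X^(D u v) else 0) else 0) else 0) : {poly int}).
  apply: eq_bigr => u _; rewrite /P; case: (deg (Lrel n) u == 2%N); last first.
    by rewrite big1 // => v; rewrite andbF.
  rewrite big_mkcond; apply: eq_bigr => v _; rewrite andbT distE //.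
  by case: (u != v); case: (deg (Lrel n) v == 2%N).
rewrite (reindex_pred _ (hh_inj hn)); last by move=> u; exact: hh_onto.
apply: eq_bigr => j _.
rewrite (reindex_pred _ (hh_inj hn)); last by move=> u; exact: hh_onto.
apply: eq_bigr => j' _.
rewrite (inj_eq (hh_inj hn)) /D.
by have [-> ->] := hh_coord hn j; have [-> ->] := hh_coord hn j'.
Qed.
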